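(* Let $m$ be a positive integer with $m\neq2^\beta$ for every integer $\beta\ge0$, let $T=2^{\lceil\lg m\rceil}-m-1$, and let $i\ge0$ be an integer. If $\varepsilon$ is a real number with $\frac{T+1}{2}+\frac{im}{2}\le\varepsilon<\frac{T+1}{2}+\frac{(i+1)m}{2}$, then $\ell_m(\varepsilon)=2+i+\lfloor\lg m\rfloor$.
   Context: $\lg$ denotes $\log_2$. The generalized Rice mapping $M:\mathbb{R}\to\mathbb{Z}_{\ge0}$ is $M(\varepsilon)=\lfloor 2\varepsilon\rfloor$ if $\varepsilon\ge0$ and $M(\varepsilon)=-\lfloor2\varepsilon\rfloor-1$ if $\varepsilon<0$. For a positive integer $m$, the Golomb codeword of a non-negative integer $N$ consists of $j=\lfloor N/m\rfloor$ in unary ($j+1$ bits) followed by $k=N\bmod m$ in minimal binary, which uses $\lfloor\lg m\rfloor$ bits if $k<2^{\lceil\lg m\rceil}-m$ and $\lceil\lg m\rceil$ bits otherwise; $\lambda_m(N)$ is the total number of bits. The code length of a real residual $\varepsilon$ is $\ell_m(\varepsilon)=\lambda_m(M(\varepsilon))$. *)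

(* Defs.v *)
From Stdlib Require Import Reals ZArith Arith Lia Lra.
Open Scope R_scope.

(* floor of a real: Int_part r = up r - 1 is the greatest integer <= r. *)
Definition rfloor (r : R) : Z := Int_part r.

Definition rice_map (e : R) : nat :=
  if Rle_dec 0 e then Z.to_nat (rfloor (2 * e))
  else Z.to_nat (- rfloor (2 * e) - 1)%Z.

(* lg = log2 : floor(lg m) = Nat.log2 m, ceil(lg m) = Nat.log2_up m. *)

Definition minbin_len (m k : nat) : nat :=
  if (k <? 2 ^ Nat.log2_up m - m)%nat then Nat.log2 m else Nat.log2_up m.

Definition golomb_len (m N : nat) : nat :=
  (N / m + 1 + minbin_len m (N mod m))%nat.

Definition code_len (m : nat) (e : R) : nat := golomb_len m (rice_map e).

(* Main.v *)
Require Import Defs.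
From Stdlib Require Import Reals ZArith Arith Lia Lra.
Open Scope R_scope.

Lemma nat_part (m i c N : nat) : (0 < c < m)%nat ->
  (i * m + c <= N < (i + 1) * m + c)%nat ->
  (N / m + 1 + (if (N mod m <? c)%nat then 0 else 1) = 2 + i)%nat.
Proof.
  intros Hc HN.
  destruct (Nat.lt_ge_cases (N - i*m) m) as [H|H].
  - assert (Hq : (N / m = i)%nat) by (symmetry; apply Nat.div_unique with (N - i*m)%nat; lia).
    assert (Hr : (N mod m = N - i*m)%nat) by (symmetry; apply Nat.mod_unique with i; lia).
    rewrite Hq, Hr. destruct (Nat.ltb_spec (N - i*m) c); lia.
  - assert (Hq : (N / m = S i)%nat) by (symmetry; apply Nat.div_unique with (N - i*m - m)%nat; lia).
    assert (Hr : (N mod m = N - i*m - m)%nat) by (symmetry; apply Nat.mod_unique with (S i); lia).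
    rewrite Hq, Hr. destruct (Nat.ltb_spec (N - i*m - m) c); lia.
Qed.

Theorem lemma1 (m : nat) (hm : (0 < m)%nat)
  (hpow : forall beta : nat, m <> (2 ^ beta)%nat)
  (i : nat) (e : R) :
  let T : Z := (2 ^ Z.of_nat (Nat.log2_up m) - Z.of_nat m - 1)%Z in
  (IZR T + 1) / 2 + INR i * INR m / 2 <= e ->
  e < (IZR T + 1) / 2 + (INR i + 1) * INR m / 2 ->
  code_len m e = (2 + i + Nat.log2 m)%nat.
Proof.
  intros T H1 H2.
  set (L := Nat.log2 m).
  assert (Hu : Nat.log2_up m = S L).
  { pose proof (Nat.le_log2_log2_up m) as A; pose proof (Nat.le_log2_up_succ_log2 m) as B.
    destruct (Nat.eq_dec (Nat.log2_up m) L) as [E|E].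
    - exfalso. symmetry in E; apply Nat.log2_log2_up_exact in E; [|lia]. destruct E as [b Hb]. exact (hpow b Hb).
    - unfold L in *; lia. }
  destruct (Nat.log2_spec m hm) as [S1 S2]. fold L in S1, S2.
  assert (HL : (2 ^ L < m)%nat).
  { destruct (Nat.eq_dec (2^L) m) as [E|E]; [exfalso; exact (hpow L (eq_sym E))|lia]. }
  set (c := (2 ^ S L - m)%nat).
  assert (Hc : (0 < c < m)%nat) by (unfold c; simpl in *; lia).
  assert (HT : IZR T + 1 = INR c).
  { unfold T. rewrite Hu. replace (2 ^ Z.of_nat (S L))%Z with (Z.of_nat (2 ^ S L)) by (rewrite Nat2Z.inj_pow; reflexivity).
    unfold c. rewrite INR_IZR_INZ. rewrite <- plus_IZR. f_equal.
    rewrite Nat2Z.inj_sub; lia. }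
  rewrite HT in H1, H2.
  assert (Hc0 : 0 < INR c) by (apply lt_0_INR; lia).
  assert (Hm0 : 0 <= INR i * INR m) by (apply Rmult_le_pos; apply pos_INR).
  unfold code_len, rice_map.
  destruct (Rle_dec 0 e) as [He|He]; [|exfalso; lra].
  destruct (base_Int_part (2*e)) as [B1 B2].
  unfold rfloor. set (z := Int_part (2*e)) in *.
  assert (Hlo : (Z.of_nat (i*m + c) <= z)%Z).
  { assert (Hz : (Z.of_nat (i*m + c) - 1 < z)%Z).
    { apply lt_IZR. rewrite minus_IZR, <- INR_IZR_INZ.
      rewrite plus_INR, mult_INR. simpl (IZR 1). lra. }
    lia. }
  assert (Hhi : (z < Z.of_nat ((i+1)*m + c))%Z).
  { apply lt_IZR. rewrite <- INR_IZR_INZ.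
    rewrite plus_INR, mult_INR, plus_INR. simpl (INR 1). lra. }
  unfold golomb_len, minbin_len. rewrite Hu.
  assert (Hpc : (2 ^ S L - m = c)%nat) by reflexivity. rewrite Hpc.
  pose proof (nat_part m i c (Z.to_nat z) Hc ltac:(lia)).
  destruct (Z.to_nat z mod m <? c)%nat; lia.
Qed.
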